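(* Let $\mathbb{K}$ be a field and let $\mathcal F=(f_1,\dots,f_t)$, $t\ge2$, be polynomials in $\mathbb{K}[x,y]$ of $y$-degree at most $d_y$ generating an ideal $I$ of dimension zero. Write $f_i=\sum_{j=0}^{d_y} f_{i,j}y^j$ with $f_{i,j}\in\mathbb{K}[x]$. Let $D\ge\Delta(\mathcal F)$ be an integer, and let $\mathbf S=[\mathbf S_1\cdots\mathbf S_t]\in\mathbb{K}[x]^{(d_y+D)\times tD}$, where $\mathbf S_i\in\mathbb{K}[x]^{(d_y+D)\times D}$ is the matrix whose $\ell$-th column ($\ell=1,\dots,D$) has the entries $f_{i,d_y},f_{i,d_y-1},\dots,f_{i,0}$ in rows $\ell,\ell+1,\dots,\ell+d_y$ and zeros elsewhere (equivalently, the $\ell$-th column is $\pi_{d_y+D}(y^{D-\ell}f_i)$). Let $c_1,\dots,c_K$ be the nonzero columns of the Hermite normal form $\mathbf H$ of $\mathbf S$. Then there exists $K'\le K$ such that $\pi_{d_y+D}^{-1}(c_{K'})$ is monic in $y$ (i.e., its coefficient of highest power of $y$ is $1$); and, with $K'$ the largest such integer, $\pi_{d_y+D}^{-1}(c_K),\pi_{d_y+D}^{-1}(c_{K-1}),\dots,\pi_{d_y+D}^{-1}(c_{K'})$ is the detaching basis of $I$ in degree $n_0$ (namely $\pi_{d_y+D}^{-1}(c_{K-i})=A_i$ for $i=0,\dots,n_0$).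
   Context: Let $\mathbb{K}$ be a field. For an ideal $I\subseteq\mathbb{K}[x,y]$, let $\mathcal G=(g_0,\dots,g_s)$ be its reduced minimal Gröbner basis for the lexicographic order with $x\prec y$, listed in decreasing order, and $n_i=\deg_y(g_i)$ (so $n_0>\cdots>n_s$). Define $A_0,A_1,\dots$ recursively: for $0\le i<n_s$, $A_i=0$; if $n_k=i$ for some $k$, $A_i=g_k$; otherwise $A_i$ is obtained from $yA_{i-1}$ by replacing its part of $y$-degree $<i$ by the normal form of that part modulo $\mathcal G$. For $n\ge n_0$, the detaching basis of $I$ in degree $n$ is $(A_{n_s},\dots,A_n)$. For $\mathcal F=(f_1,\dots,f_t)$ generating $I$, $\Delta(\mathcal F)$ is the minimal integer $\Delta$ such that for each $i=n_s,\dots,n_0$ there exist $w_{i,1},\dots,w_{i,t}\in\mathbb{K}[x,y]$, all of $y$-degree less than $\Delta$, with $A_i=\sum_{j=1}^t w_{i,j}f_j$. For $n\ge1$, $\pi_n$ is the $\mathbb{K}[x]$-module isomorphism from $\{f\in\mathbb{K}[x,y]:\deg_y f<n\}$ to $\mathbb{K}[x]^n$ sending $f_0+f_1y+\cdots+f_{n-1}y^{n-1}$ to $[f_{n-1},\dots,f_1,f_0]^\top$. Hermite normal forms are with respect to column operations: the Hermite normal form of $\mathbf S\in\mathbb{K}[x]^{n\times m}$ is the unique matrix $\mathbf H=\mathbf S\mathbf U$, with $\mathbf U\in\mathbb{K}[x]^{m\times m}$ unimodular, such that its nonzero columns are the first ones, it is in lower echelon form (the index of the first nonzero entry, the pivot,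 of each nonzero column strictly increases with the column index), every pivot is monic in $x$, and in the row of each pivot all entries in earlier columns have $x$-degree less than that pivot. *)

(* Defs.v *)
(* Bivariate polynomials K[x,y] are {poly {poly K}}:
   the outer variable is y, the inner one is x.  p`_b is the coefficient of
   y^b (an element of K[x]), and (p`_b)`_a is the coefficient of x^a y^b. *)
From HB Require Import structures.
From mathcomp Require Import all_boot all_order all_algebra.
Set Implicit Arguments. Unset Strict Implicit. Unset Printing Implicit Defensive.
Import Order.TTheory GRing.Theory Num.Theory.
Local Open Scope ring_scope.

Section Defs.
Variable K : fieldType.
Local Notation P2 := {poly {poly K}}.

Definition in_ideal (F : seq P2) (p : P2) : Prop :=
  exists w : 'I_(size F) -> P2, p = \sum_(j < size F) w j * F`_j.

Definition coef2 (p : P2) (a b : nat) : K := (p`_b)`_a.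

(* y-degree, and the leading monomial (a,b) ~ x^a y^b for lex order x < y *)
Definition ydeg (p : P2) : nat := (size p).-1.
Definition lm (p : P2) : nat * nat := ((size (lead_coef p)).-1, ydeg p).
Definition lc2 (p : P2) : K := lead_coef (lead_coef p).

Definition mdiv (m1 m2 : nat * nat) : bool := (m1.1 <= m2.1)%N && (m1.2 <= m2.2)%N.
Definition mlt (m1 m2 : nat * nat) : bool :=
  (m1.2 < m2.2)%N || ((m1.2 == m2.2) && (m1.1 < m2.1)%N).

Definition groebner (F G : seq P2) : Prop :=
  (forall g, g \in G -> in_ideal F g) /\
  (forall p, in_ideal F p -> p != 0 ->
     exists2 g, g \in G & (g != 0) && mdiv (lm g) (lm p)).

Definition reduced (G : seq P2) : Prop :=
  forall i, (i < size G)%N ->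
    [/\ G`_i != 0, lc2 G`_i = 1 &
      forall j, (j < size G)%N -> j != i ->
        forall a b, coef2 G`_i a b != 0 -> ~~ mdiv (lm G`_j) (a, b)].

Definition is_rGB (F G : seq P2) : Prop :=
  [/\ groebner F G, reduced G & sorted (fun g h => mlt (lm h) (lm g)) G].

Definition n0 (G : seq P2) : nat := ydeg (head 0 G).
Definition ns (G : seq P2) : nat := ydeg (last 0 G).

Definition is_NF (F G : seq P2) (q r : P2) : Prop :=
  in_ideal F (q - r) /\
  forall a b, coef2 r a b != 0 -> forall g, g \in G -> ~~ mdiv (lm g) (a, b).

Definition is_Aseq (F G : seq P2) (A : nat -> P2) : Prop :=
  forall i,
    [/\ (i < ns G)%N -> A i = 0,
        (forall k, (k < size G)%N -> ydeg G`_k = i -> A i = G`_k) &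
        ((ns G <= i)%N -> (forall k, (k < size G)%N -> ydeg G`_k != i) ->
          exists r, is_NF F G (take_poly i ('X * A i.-1)) r /\
            A i = 'X * A i.-1 - take_poly i ('X * A i.-1) + r)].

Definition detaching_basis (G : seq P2) (A : nat -> P2) (n : nat) : seq P2 :=
  [seq A i | i <- iota (ns G) (n - ns G).+1].

Definition Delta_ok (F G : seq P2) (A : nat -> P2) (Delta : nat) : Prop :=
  forall i, (ns G <= i <= n0 G)%N ->
    exists w : 'I_(size F) -> P2,
      (forall j, (size (w j) <= Delta)%N) /\ A i = \sum_(j < size F) w j * F`_j.
Definition is_Delta (F G : seq P2) (A : nat -> P2) (Delta : nat) : Prop :=
  Delta_ok F G A Delta /\ forall D', Delta_ok F G A D' -> (Delta <= D')%N.

(* <F> has dimension zero: proper, and K[x,y]/<F> finite-dimensional over K *)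
Definition zero_dim (F : seq P2) : Prop :=
  ~ in_ideal F 1 /\
  exists B : seq P2, forall p : P2, exists c : 'I_(size B) -> K,
    in_ideal F (p - \sum_(j < size B) (c j)%:P%:P * B`_j).

Definition pi (n : nat) (f : P2) : 'cV[{poly K}]_n := \col_(r < n) f`_(n.-1 - r).
Definition piinv (n : nat) (c : 'cV[{poly K}]_n) : P2 :=
  \sum_(r < n) (c r 0)%:P * 'X^(n.-1 - r).

(* the matrix S = [S_1 ... S_t]; column c = i*D + l (0-based) is
   pi_{dy+D}(y^(D-1-l) f_i) *)
Definition Smat (F : seq P2) (dy D : nat) : 'M[{poly K}]_(dy + D, size F * D) :=
  \matrix_(r, c) (pi (dy + D) ('X^(D.-1 - (c %% D)) * F`_(c %/ D))) r 0.

Definition is_HNF (m n : nat) (H : 'M[{poly K}]_(m, n)) (Kc : nat) : Prop :=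
  (Kc <= n)%N /\
  (forall j : 'I_n, (Kc <= j)%N -> col j H = 0) /\
  exists piv : 'I_n -> 'I_m,
    (forall j : 'I_n, (j < Kc)%N ->
       [/\ H (piv j) j \is monic,
           (forall r : 'I_m, (r < piv j)%N -> H r j = 0) &
           (forall j' : 'I_n, (j' < j)%N -> (size (H (piv j) j') < size (H (piv j) j))%N)]) /\
    (forall j1 j2 : 'I_n, (j1 < j2)%N -> (j2 < Kc)%N -> (piv j1 < piv j2)%N).

(* pi^{-1} of the column of index j (0-based), 0 if out of range *)
Definition colpoly (m n : nat) (H : 'M[{poly K}]_(m, n)) (j : nat) : P2 :=
  if (insub j : option 'I_n) is Some c then piinv (col c H) else 0.

End Defs.

(* Main.v *)
Require Import Defs.
From HB Require Import structures.
From mathcomp Require Import all_boot all_order all_algebra.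
From mathcomp Require Import zify.
Import Order.TTheory GRing.Theory Num.Theory.
Local Open Scope ring_scope.
Set Implicit Arguments. Unset Strict Implicit. Unset Printing Implicit Defensive.

Lemma in_ideal0 (K : fieldType) (F : seq {poly {poly K}}) : in_ideal F 0.
Proof. exists (fun _ => 0); by rewrite big1 // => j _; rewrite mul0r. Qed.

Lemma in_idealD (K : fieldType) (F : seq {poly {poly K}}) p q :
  in_ideal F p -> in_ideal F q -> in_ideal F (p + q).
Proof.
move=> [w ->] [w' ->]; exists (fun j => w j + w' j).
by rewrite -big_split /=; apply: eq_bigr => j _; rewrite mulrDl.
Qed.

Lemma in_idealM (K : fieldType) (F : seq {poly {poly K}}) c p :
  in_ideal F p -> in_ideal F (c * p).
Proof.
move=> [w ->]; exists (fun j => c * w j).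
by rewrite mulr_sumr; apply: eq_bigr => j _; rewrite mulrA.
Qed.

Lemma in_idealN (K : fieldType) (F : seq {poly {poly K}}) p :
  in_ideal F p -> in_ideal F (- p).
Proof. by move=> h; rewrite -mulN1r; apply: in_idealM. Qed.

Lemma in_idealB (K : fieldType) (F : seq {poly {poly K}}) p q :
  in_ideal F p -> in_ideal F q -> in_ideal F (p - q).
Proof. by move=> hp hq; apply: in_idealD => //; apply: in_idealN. Qed.

Lemma in_ideal_sum (K : fieldType) (F : seq {poly {poly K}}) (I : finType) (f : I -> _) :
  (forall i, in_ideal F (f i)) -> in_ideal F (\sum_i f i).
Proof.
move=> h; apply: (big_ind (in_ideal F)) => //; first exact: in_ideal0.
exact: in_idealD.
Qed.

Lemma in_ideal_gen (K : fieldType) (F : seq {poly {poly K}}) j :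
  (j < size F)%N -> in_ideal F F`_j.
Proof.
move=> hj; exists (fun k : 'I_(size F) => if val k == j then 1 else 0).
rewrite (bigD1 (Ordinal hj)) //= eqxx mul1r big1 ?addr0 // => k hk.
case: eqP => [e|_]; last by rewrite mul0r.
by move: hk; rewrite -(inj_eq val_inj) /= e eqxx.
Qed.

Lemma piE (K : fieldType) n (f : {poly {poly K}}) r : Defs.pi n f r 0 = f`_(n.-1 - r).
Proof. by rewrite mxE. Qed.

Lemma piinv_coef (K : fieldType) n (c : 'cV[{poly K}]_n) (r : 'I_n) :
  (piinv c)`_(n.-1 - r) = c r 0.
Proof.
rewrite /piinv coef_sum (bigD1 r) //= coefCM coefXn eqxx mulr1 big1 ?addr0 //.
move=> k hk; rewrite coefCM coefXn.
case: eqP => [e|_]; last by rewrite mulr0.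
have := ltn_ord r; have := ltn_ord k => h1 h2.
exfalso; move/eqP: hk; apply; apply: val_inj; rewrite /=; lia.
Qed.

Lemma piinv_coef_ge (K : fieldType) n (c : 'cV[{poly K}]_n) b :
  (n <= b)%N -> (piinv c)`_b = 0.
Proof.
move=> hb; rewrite /piinv coef_sum big1 // => k _; rewrite coefCM coefXn.
by case: eqP => [e|_]; [have := ltn_ord k; rewrite /=; lia | rewrite mulr0].
Qed.


Lemma ord_rev_lt n b : (b < n)%N -> (n.-1 - b < n)%N.
Proof. lia. Qed.

Lemma piinv_coef_lt (K : fieldType) n (c : 'cV[{poly K}]_n) b (hb : (b < n)%N) :
  (piinv c)`_b = c (Ordinal (ord_rev_lt hb)) 0.
Proof. by rewrite -piinv_coef /=; congr (_`_ _); rewrite /=; lia. Qed.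

Lemma piinvK (K : fieldType) n (f : {poly {poly K}}) :
  (size f <= n)%N -> piinv (Defs.pi n f) = f.
Proof.
move=> hf; apply/polyP => b; case: (ltnP b n) => hb.
  by rewrite piinv_coef_lt piE /=; congr (_`_ _); rewrite /=; lia.
by rewrite piinv_coef_ge // nth_default //; apply: leq_trans hf hb.
Qed.

Lemma piinvD (K : fieldType) n (c1 c2 : 'cV[{poly K}]_n) :
  piinv (c1 + c2) = piinv c1 + piinv c2.
Proof.
by rewrite /piinv -big_split; apply: eq_bigr => r _; rewrite mxE polyCD mulrDl.
Qed.

Lemma piinv_mul (K : fieldType) m n (S : 'M[{poly K}]_(m, n)) (u : 'cV_n) :
  piinv (S *m u) = \sum_k (u k 0)%:P * piinv (col k S).
Proof.
apply/polyP => b; rewrite -[LHS]/((piinv (S *m u))`_b) [RHS]coef_sum.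
case: (ltnP b m) => hb.
  rewrite (piinv_coef_lt _ hb) mxE; apply: eq_bigr => k _.
  by rewrite coefCM (piinv_coef_lt _ hb) !mxE mulrC.
rewrite piinv_coef_ge // big1 // => k _; by rewrite coefCM piinv_coef_ge // mulr0.
Qed.


Lemma colS (K : fieldType) (F : seq {poly {poly K}}) dy D (k : 'I_(size F * D)) :
  col k (Smat F dy D) = Defs.pi (dy + D) ('X^(D.-1 - k %% D) * F`_(k %/ D)).
Proof. by apply/matrixP => r j; rewrite !mxE. Qed.

Lemma colS_ideal (K : fieldType) (F : seq {poly {poly K}}) dy D (k : 'I_(size F * D)) :
  (forall f, f \in F -> (size f <= dy.+1)%N) ->
  in_ideal F (piinv (col k (Smat F dy D))).
Proof.
move=> hF; have hk := ltn_ord k.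
have : (0 < size F * D)%N by apply: leq_ltn_trans hk.
rewrite muln_gt0 => /andP[_ hD].
have hj : (k %/ D < size F)%N by rewrite ltn_divLR.
have hl : (k %% D < D)%N by rewrite ltn_mod.
rewrite colS piinvK; first by apply: in_idealM; apply: in_ideal_gen.
apply: leq_trans (size_polyMleq _ _) _; rewrite size_polyXn.
have := hF _ (mem_nth 0 hj).
move: (size F`_(k %/ D)) => s hs; lia.
Qed.

Lemma piinvSmul_ideal (K : fieldType) (F : seq {poly {poly K}}) dy D (u : 'cV_(size F * D)) :
  (forall f, f \in F -> (size f <= dy.+1)%N) ->
  in_ideal F (piinv (Smat F dy D *m u)).
Proof.
move=> hF; rewrite piinv_mul; apply: in_ideal_sum => k; apply: in_idealM.
exact: colS_ideal.
Qed.

Lemma sum_reindex (R : zmodType) (f : nat -> R) t D :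
  \sum_(k < t * D) f k = \sum_(j < t) \sum_(l < D) f (j * D + l)%N.
Proof.
elim: t => [|t IH]; first by rewrite mul0n !big_ord0.
rewrite mulSnr big_split_ord /= IH big_ord_recr /=; congr (_ + _).
Qed.

Lemma poly_trunc (R : nzSemiRingType) (p : {poly R}) D :
  (size p <= D)%N -> p = \sum_(e < D) p`_e *: 'X^e.
Proof.
move=> hp; rewrite -poly_def; apply/polyP => i; rewrite coef_poly.
by case: ltnP => // hi; rewrite nth_default //; apply: leq_trans hp hi.
Qed.

Lemma coef_mul_rev (R : comNzRingType) (p q : {poly R}) D N :
  (size p <= D)%N ->
  (p * q)`_N = \sum_(l < D) ('X^(D.-1 - l) * q)`_N * p`_(D.-1 - l).
Proof.
move=> hp; rewrite {1}(poly_trunc hp) mulr_suml coef_sum.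
under eq_bigr => e _ do rewrite -scalerAl coefZ mulrC.
rewrite -(big_mkord xpredT (fun e => ('X^e * q)`_N * p`_e)) big_rev_mkord subn0.
by apply: eq_bigr => l _; have -> : (D - l.+1 = D.-1 - l)%N by lia.
Qed.

Lemma inM (K : fieldType) (F : seq {poly {poly K}}) dy D (w : 'I_(size F) -> {poly {poly K}}) :
  (forall j, (size (w j) <= D)%N) ->
  exists v : 'cV_(size F * D),
    Defs.pi (dy + D) (\sum_j w j * F`_j) = Smat F dy D *m v.
Proof.
move=> hw.
pose wn (j : nat) : {poly {poly K}} := if insub j is Some o then w o else 0.
exists (\col_(k < size F * D) (wn (k %/ D)%N)`_(D.-1 - k %% D)%N).
apply/matrixP => r z; rewrite !mxE coef_sum.
set N := ((dy + D).-1 - r)%N.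
under [RHS]eq_bigr => k _ do rewrite ?mxE.
rewrite (sum_reindex (fun k : nat => ('X^(D.-1 - k %% D)%N * F`_(k %/ D)%N)`_N *
   (wn (k %/ D)%N)`_(D.-1 - k %% D)%N)).
apply: eq_bigr => j _; rewrite (coef_mul_rev _ _ (hw j)).
apply: eq_bigr => l _.
have hl := ltn_ord l; have hD : (0 < D)%N by apply: leq_ltn_trans hl.
have -> : ((j * D + l) %/ D = j)%N by rewrite divnMDl // divn_small // addn0.
have -> : ((j * D + l) %% D = l)%N by rewrite modnMDl modn_small.
by rewrite /wn valK.
Qed.

Lemma zd_dep (K : fieldType) (F : seq {poly {poly K}}) (p : nat -> {poly {poly K}}) :
  zero_dim F -> exists N (lam : 'I_N.+1 -> K),
    (exists j, lam j != 0) /\ in_ideal F (\sum_(j < N.+1) (lam j)%:P%:P * p j).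
Proof.
move=> [_ [B hB]]; set N := size B.
have [c hc] := fin_all_exists (fun j : 'I_N.+1 => hB (p j)).
pose C : 'M[K]_(N.+1, N) := \matrix_(j, k) c j k.
have hker : kermx C != 0.
  rewrite kermx_eq0 -row_leq_rank; have := rank_leq_col C; lia.
have [i0 [j0 hne]] : exists i j, kermx C i j != 0.
  case: (boolP [exists i, [exists j, kermx C i j != 0]]).
    by move=> /existsP[i /existsP[j h]]; exists i, j.
  move=> h; exfalso; move/negP: hker; apply; apply/eqP/matrixP => i j.
  move: h; rewrite negb_exists => /forallP/(_ i); rewrite negb_exists => /forallP/(_ j).
  by move/negPn/eqP => ->; rewrite mxE.
pose lam : 'I_N.+1 -> K := fun j => kermx C i0 j.
exists N, lam; split; first by exists j0.
have hz : forall k, \sum_(j < N.+1) lam j * c j k = 0.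
  move=> k; have := congr1 (fun M : 'M[K]_(N.+1, N) => M i0 k) (mulmx_ker C).
  rewrite [X in X = _]mxE [X in _ = X]mxE => h; rewrite -[RHS]h.
  have hC : forall j k, C j k = c j k by move=> j' k'; rewrite /C mxE.
  by apply: eq_bigr => j _; rewrite hC.
have -> : \sum_(j < N.+1) (lam j)%:P%:P * p j =
  \sum_(j < N.+1) (lam j)%:P%:P * (p j - \sum_(k < N) (c j k)%:P%:P * B`_k) +
  \sum_(j < N.+1) (lam j)%:P%:P * \sum_(k < N) (c j k)%:P%:P * B`_k.
  by rewrite -big_split /=; apply: eq_bigr => j _; rewrite -mulrDr subrK.
have -> : \sum_(j < N.+1) (lam j)%:P%:P * \sum_(k < N) (c j k)%:P%:P * B`_k = 0.
  under eq_bigr => j _ do rewrite mulr_sumr.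
  rewrite exchange_big /= big1 // => k _.
  under eq_bigr => j _ do rewrite mulrA -!polyCM.
  by rewrite -mulr_suml -!rmorph_sum /= hz !polyC0 mul0r.
rewrite addr0; apply: in_ideal_sum => j; apply: in_idealM; exact: hc.
Qed.

Lemma coef2_lm (K : fieldType) (p : {poly {poly K}}) :
  coef2 p (lm p).1 (lm p).2 = lc2 p.
Proof. by rewrite /coef2 /lm /ydeg /lc2 /= -!lead_coefE. Qed.

Lemma red_mem (K : fieldType) (G : seq {poly {poly K}}) g :
  reduced G -> g \in G -> g != 0 /\ lc2 g = 1.
Proof.
move=> hr /(nthP 0)[k hk <-]; by have [] := hr k hk.
Qed.

Lemma red_ndiv (K : fieldType) (G : seq {poly {poly K}}) j k :
  reduced G -> (j < size G)%N -> (k < size G)%N -> j != k ->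
  ~~ mdiv (lm G`_j) (lm G`_k).
Proof.
move=> hr hj hk hjk; have [_ hl hd] := hr k hk.
have := hd j hj hjk (lm G`_k).1 (lm G`_k).2; rewrite coef2_lm hl oner_neq0.
by rewrite -surjective_pairing; apply.
Qed.

Lemma red_size (K : fieldType) (G : seq {poly {poly K}}) j k :
  reduced G -> (j < size G)%N -> (k < size G)%N -> j != k ->
  (ydeg G`_j <= ydeg G`_k)%N ->
  (size (lead_coef G`_k) < size (lead_coef G`_j))%N.
Proof.
move=> hr hj hk hjk hy; have := red_ndiv hr hj hk hjk.
rewrite /mdiv /lm /= hy andbT -ltnNge.
move: (size (lead_coef G`_k)) (size (lead_coef G`_j)) => a b; lia.
Qed.

Lemma mlt_trans : transitive mlt.
Proof.
move=> [a2 b2] [a1 b1] [a3 b3]; rewrite /mlt /=.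
move=> /orP[h1|/andP[/eqP h1 h1']] /orP[h2|/andP[/eqP h2 h2']]; apply/orP.
- by left; lia.
- by left; lia.
- by left; lia.
- by right; apply/andP; split; [apply/eqP; lia | lia].
Qed.

Lemma rGB_sorted (K : fieldType) (F G : seq {poly {poly K}}) j k :
  is_rGB F G -> (j <= k)%N -> (k < size G)%N -> (ydeg G`_k <= ydeg G`_j)%N.
Proof.
move=> [_ _ hs] hjk hk; rewrite leq_eqVlt in hjk; case/orP: hjk => [/eqP -> //|hjk].
have tr : transitive (fun g h : {poly {poly K}} => mlt (lm h) (lm g)).
  by move=> y x z h1 h2; apply: mlt_trans h2 h1.
have := sorted_ltn_nth tr 0 hs; move=> /(_ j k); rewrite !inE => h.
have := h (ltn_trans hjk hk) hk hjk; rewrite /mlt /lm /= => /orP[h1|/andP[/eqP h1 _]]; lia.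
Qed.

Lemma zd_x (K : fieldType) (F G : seq {poly {poly K}}) :
  zero_dim F -> groebner F G -> exists2 g, g \in G & ydeg g = 0%N.
Proof.
move=> hz [_ hgb].
have [N [lam [[j0 hj0] hI]]] := zd_dep (fun j => ('X^j)%:P) hz.
pose q : {poly K} := \sum_(j < N.+1) lam j *: 'X^j.
have hq : q != 0.
  apply/eqP => /(congr1 (fun p : {poly K} => p`_j0)); rewrite coef0 coef_sum.
  rewrite (bigD1 j0) //= coefZ coefXn eqxx mulr1 big1 ?addr0; first by apply/eqP.
  move=> j hj; rewrite coefZ coefXn; case: eqP => [e|]; last by rewrite mulr0.
  by exfalso; move/eqP: hj; apply; apply: val_inj.
have e : \sum_(j < N.+1) (lam j)%:P%:P * ('X^j)%:P = q%:P.
  by rewrite /q rmorph_sum /=; apply: eq_bigr => j _; rewrite -polyCM mul_polyC.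
rewrite e in hI.
have hqP : q%:P != 0 by rewrite polyC_eq0.
have [g hg /andP[_ hd]] := hgb _ hI hqP.
exists g => //; move: hd; rewrite /mdiv /lm /ydeg /= size_polyC.
by case: (q != 0) => /=; case/andP => _; lia.
Qed.

Lemma zd_y (K : fieldType) (F G : seq {poly {poly K}}) :
  zero_dim F -> groebner F G -> exists2 g, g \in G & (size (lead_coef g) <= 1)%N.
Proof.
move=> hz [_ hgb].
have [N [lam [[j0 hj0] hI]]] := zd_dep (fun j => 'X^j) hz.
set q := \sum_(j < N.+1) _ in hI.
have hc : forall i, q`_i = (\sum_(j < N.+1) lam j * (i == j)%:R)%:P.
  move=> i; rewrite /q coef_sum rmorph_sum; apply: eq_bigr => j _.
  by rewrite coefCM coefXn rmorphM /=; case: (i == j); rewrite ?polyC1 ?polyC0.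
have hq : q != 0.
  apply/eqP => /(congr1 (fun p : {poly {poly K}} => p`_j0)); rewrite coef0 hc.
  rewrite (bigD1 j0) //= eqxx mulr1 big1 ?addr0; first by apply/eqP; rewrite polyC_eq0.
  move=> j hj; case: eqP => [e|]; last by rewrite mulr0.
  by exfalso; move/eqP: hj; apply; apply: val_inj.
have [g hg /andP[gnz hd]] := hgb _ hI hq.
exists g => //; move: hd; rewrite /mdiv /lm /= (lead_coefE q) hc size_polyC.
move=> /andP[h _]; have : lead_coef g != 0 by rewrite lead_coef_eq0.
rewrite -size_poly_eq0; move: h; case: (_ != 0) => /=; lia.
Qed.

Lemma size_coefs (R : nzSemiRingType) (p : {poly R}) n :
  p`_n != 0 -> (forall b, (n < b)%N -> p`_b = 0) -> size p = n.+1.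
Proof.
move=> hn hb; apply/eqP; rewrite eqn_leq; apply/andP; split.
  by apply/leq_sizeP => b; apply: hb.
rewrite ltnNge; apply/negP => /leq_sizeP/(_ n (leqnn n)) h.
by rewrite h eqxx in hn.
Qed.

Lemma lc_coef (R : nzSemiRingType) (p : {poly R}) n :
  size p = n.+1 -> lead_coef p = p`_n.
Proof. by move=> h; rewrite lead_coefE h. Qed.

Lemma NF_size (K : fieldType) (F G : seq {poly {poly K}}) q r i :
  groebner F G -> is_NF F G q r -> (size q <= i)%N -> (size r <= i)%N.
Proof.
move=> [_ hgb] [hI hred] hq; case: (leqP (size r) i) => // hlt; exfalso.
have rnz : r != 0 by rewrite -size_poly_eq0 -lt0n; apply: leq_ltn_trans hlt.
have hs : size (q - r) = size r.
  rewrite -(prednK (leq_ltn_trans (leq0n i) hlt)); apply: size_coefs.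
    rewrite coefB (nth_default _ (leq_trans hq _)); last by lia.
    by rewrite sub0r oppr_eq0 -lead_coefE lead_coef_eq0.
  move=> b hb; have hrb : (size r <= b)%N by move: hb; case: (size r) => //.
  rewrite coefB !nth_default ?subr0 //; apply: leq_trans hq _; apply: leq_trans (ltnW hlt) hrb.
have hlc : lead_coef (q - r) = - lead_coef r.
  rewrite lead_coefE hs coefB (nth_default _ (leq_trans hq _)) ?sub0r -?lead_coefE //; lia.
have qrnz : q - r != 0 by rewrite -size_poly_eq0 hs size_poly_eq0.
have [g hg /andP[_ hd]] := hgb _ hI qrnz.
have : coef2 r (lm r).1 (lm r).2 != 0.
  by rewrite coef2_lm /lc2 lead_coef_eq0 lead_coef_eq0.
move/hred/(_ g hg); rewrite -surjective_pairing.
suff -> : lm r = lm (q - r) by rewrite hd.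
by rewrite /lm /ydeg hlc size_polyN hs.
Qed.

Definition Ainv (K : fieldType) (F G : seq {poly {poly K}}) (A : nat -> {poly {poly K}}) i : Prop :=
  [/\ in_ideal F (A i), size (A i) = i.+1,
      (exists2 g, g \in G & (ydeg g <= i)%N /\ lead_coef (A i) = lead_coef g),
      (forall g, g \in G -> (ydeg g <= i)%N -> (size (lead_coef (A i)) <= size (lead_coef g))%N) &
      (forall b a, (b < i)%N -> coef2 (A i) a b != 0 -> forall g, g \in G -> ~~ mdiv (lm g) (a, b))].

Lemma ns0 (K : fieldType) (F G : seq {poly {poly K}}) :
  zero_dim F -> is_rGB F G -> ns G = 0%N /\ (0 < size G)%N.
Proof.
move=> hz hG; have [hgb _ _] := hG.
have [g hg hg0] := zd_x hz hgb; case/(nthP 0): hg => k hk e.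
have hs : (0 < size G)%N by apply: leq_ltn_trans hk.
split => //; rewrite /ns -nth_last.
have hk' : (k <= (size G).-1)%N by rewrite -ltnS prednK.
have hl : ((size G).-1 < size G)%N by rewrite prednK.
by have := rGB_sorted hG hk' hl; rewrite e hg0 leqn0 => /eqP.
Qed.

Lemma Ainv_case1 (K : fieldType) (F G : seq {poly {poly K}}) (A : nat -> {poly {poly K}}) i k :
  is_rGB F G -> is_Aseq F G A -> (k < size G)%N -> ydeg G`_k = i -> Ainv F G A i.
Proof.
move=> [[hgb1 _] hred _] hA hk hki.
have [_ h2 _] := hA i; have e := h2 k hk hki.
have [gnz glc hd] := hred k hk.
split; rewrite e.
- exact: hgb1 (mem_nth 0 hk).
- by rewrite -hki /ydeg prednK // lt0n size_poly_eq0.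
- by exists G`_k; [apply: mem_nth | rewrite hki].
- move=> g /(nthP 0)[j hj <-] hy; case: (eqVneq j k) => [->//|hjk].
  by apply: ltnW; apply: red_size hred hj hk hjk _; rewrite hki.
- move=> b a hb hc g /(nthP 0)[j hj <-]; case: (eqVneq j k) => [->|hjk].
    rewrite /mdiv /lm /= negb_and; apply/orP; right; rewrite -ltnNge hki //.
  exact: hd j hj hjk a b hc.
Qed.

Lemma Ainv_case2 (K : fieldType) (F G : seq {poly {poly K}}) (A : nat -> {poly {poly K}}) i :
  zero_dim F -> is_rGB F G -> is_Aseq F G A ->
  ~~ [exists k : 'I_(size G), ydeg G`_k == i.+1] -> Ainv F G A i -> Ainv F G A i.+1.
Proof.
move=> hz hG hA hne [IH1 IH2 IH3 IH4 IH5].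
have [hgb hred _] := hG; have [hns _] := ns0 hz hG.
have hno : forall k, (k < size G)%N -> ydeg G`_k != i.+1.
  move=> k hk; apply/negP => h; move: hne; rewrite negb_exists => /forallP /(_ (Ordinal hk)).
  by rewrite /= h.
have [_ _ h3] := hA i.+1.
have hnsi : (ns G <= i.+1)%N by rewrite hns.
have [r [hNF eA]] := h3 hnsi hno.
rewrite /= in eA.
set P := 'X * A i in eA; set q := take_poly i.+1 P in eA hNF.
have hq : (size q <= i.+1)%N by apply: size_take_poly.
have hr := NF_size hgb hNF hq.
have Ainz : A i != 0 by rewrite -size_poly_eq0 IH2.
have hlow : forall b, (b < i.+1)%N -> (A i.+1)`_b = r`_b.
  by move=> b hb; rewrite eA coefD coefB /q coef_take_poly hb subrr add0r.
have htop : (A i.+1)`_i.+1 = lead_coef (A i).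
  rewrite eA coefD coefB /q coef_take_poly ltnn subr0 (nth_default _ hr) addr0.
  by rewrite /P coefXM /= (lc_coef IH2).
have hhigh : forall b, (i.+1 < b)%N -> (A i.+1)`_b = 0.
  move=> b hb; rewrite eA coefD coefB /q coef_take_poly ltnNge (ltnW hb) /= subr0.
  rewrite (nth_default _ (leq_trans hr (ltnW hb))) addr0 /P coefXM.
  case: (b == 0%N) => //; rewrite nth_default // IH2; lia.
have hsz : size (A i.+1) = i.+2.
  by apply: size_coefs => //; rewrite htop lead_coef_eq0.
have hlc : lead_coef (A i.+1) = lead_coef (A i) by rewrite (lc_coef hsz) htop.
split => //.
- have -> : A i.+1 = P - (q - r) by rewrite eA opprB addrCA addrC.
  apply: in_idealB; first exact: in_idealM.
  by case: hNF.
- by case: IH3 => g hg [hy he]; exists g => //; split; [apply: leq_trans hy _|rewrite hlc].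
- move=> g hg hy; rewrite hlc; apply: IH4 => //.
  case/(nthP 0): hg hy => j hj <- hy.
  by have := hno j hj; move: hy; rewrite leq_eqVlt => /orP[->|].
- move=> b a hb; rewrite /coef2 hlow //; exact: hNF.2.
Qed.

Lemma Ainv_all (K : fieldType) (F G : seq {poly {poly K}}) (A : nat -> {poly {poly K}}) :
  zero_dim F -> is_rGB F G -> is_Aseq F G A -> forall i, Ainv F G A i.
Proof.
move=> hz hG hA; elim => [|i IH].
  have [hgb _ _] := hG; have [g hg hg0] := zd_x hz hgb; case/(nthP 0): hg => k hk e.
  by apply: (Ainv_case1 hG hA hk); rewrite e.
case: (boolP [exists k : 'I_(size G), ydeg G`_k == i.+1]).
  by move=> /existsP[k /eqP hk]; apply: (Ainv_case1 hG hA (ltn_ord k) hk).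
by move=> hne; apply: Ainv_case2.
Qed.

Lemma G2 (K : fieldType) (F G : seq {poly {poly K}}) (A : nat -> {poly {poly K}}) i p :
  groebner F G -> Ainv F G A i -> in_ideal F p -> size p = i.+1 ->
  (size (lead_coef (A i)) <= size (lead_coef p))%N.
Proof.
move=> [_ hgb] [_ _ _ IH4 _] hp hs.
have pnz : p != 0 by rewrite -size_poly_eq0 hs.
have [g hg /andP[gnz hd]] := hgb _ hp pnz.
move: hd; rewrite /mdiv /lm /ydeg hs /= => /andP[h1 h2].
have := IH4 g hg h2.
have : lead_coef p != 0 by rewrite lead_coef_eq0.
rewrite -size_poly_eq0 -lt0n; move: h1; move: (size (lead_coef p)) (size (lead_coef g)) => a b.
move: (size (lead_coef (A i))) => c; lia.
Qed.

Lemma G1 (K : fieldType) (F G : seq {poly {poly K}}) (A : nat -> {poly {poly K}}) i p :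
  groebner F G -> Ainv F G A i -> in_ideal F p -> size p = i.+1 ->
  lead_coef (A i) %| lead_coef p.
Proof.
move=> hgb hI hp hs; have hI' := hI; case: hI' => IH1 IH2 _ _ _.
set d := lead_coef (A i); set c := lead_coef p.
have dnz : d != 0 by rewrite lead_coef_eq0 -size_poly_eq0 IH2.
apply/modp_eq0P; case: (eqVneq (c %% d) 0) => // hm; exfalso.
pose p' := p - (c %/ d)%:P * A i.
have hp'i : p'`_i = c %% d.
  rewrite coefB coefCM -(lc_coef hs) -(lc_coef IH2) -/c -/d.
  by rewrite {1}(divp_eq c d) addrC addKr.
have hsz : size p' = i.+1.
  apply: size_coefs; first by rewrite hp'i.
  by move=> b hb; rewrite coefB coefCM !nth_default ?mulr0 ?subr0 // ?IH2 ?hs.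
have hp' : in_ideal F p' by rewrite /p'; apply: in_idealB => //; apply: in_idealM.
have := G2 hgb hI hp' hsz.
rewrite (lc_coef hsz) hp'i -/d => h.
have := ltn_modp c d; rewrite dnz ltnNge h /= => H; discriminate H.
Qed.

Lemma echelon (K : fieldType) m n (H : 'M[{poly K}]_(m, n)) Kc (piv : 'I_n -> 'I_m)
    (w : 'cV_n) :
  (forall j : 'I_n, (Kc <= j)%N -> col j H = 0) ->
  (forall j : 'I_n, (j < Kc)%N -> forall r : 'I_m, (r < piv j)%N -> H r j = 0) ->
  (forall j1 j2 : 'I_n, (j1 < j2)%N -> (j2 < Kc)%N -> (piv j1 < piv j2)%N) ->
  H *m w != 0 ->
  exists j0 : 'I_n, [/\ (j0 < Kc)%N, w j0 0 != 0,
    (forall r : 'I_m, (r < piv j0)%N -> (H *m w) r 0 = 0) &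
    (H *m w) (piv j0) 0 = H (piv j0) j0 * w j0 0].
Proof.
move=> hzero hup hmono hnz.
have hz0 : forall (r : 'I_m) (k : 'I_n), (Kc <= k)%N -> H r k = 0.
  by move=> r k hk; have := congr1 (fun M : 'cV_m => M r 0) (hzero k hk); rewrite !mxE.
pose P := fun j : nat => [exists o : 'I_n, (val o == j) && (j < Kc)%N && (w o 0 != 0)].
have hex : exists j, P j.
  case: (boolP [exists o : 'I_n, (o < Kc)%N && (w o 0 != 0)]).
    by move=> /existsP[o /andP[h1 h2]]; exists o; apply/existsP; exists o; rewrite eqxx h1 h2.
  move=> hn; exfalso; move/eqP: hnz; apply; apply/matrixP => r z; rewrite !mxE.
  apply: big1 => k _; case: (ltnP k Kc) => hk; last by rewrite hz0 ?mul0r.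
  move: hn; rewrite negb_exists => /forallP/(_ k); rewrite hk /= negbK => /eqP.
  by rewrite (ord1 z) => ->; rewrite mulr0.
case: (ex_minnP hex) => j0n /existsP[o /andP[/andP[/eqP ho hoK] hw]] hmin.
subst j0n.
have hsum : forall r : 'I_m, (r <= piv o)%N -> (H *m w) r 0 = H r o * w o 0.
  move=> r hr; rewrite mxE (bigD1 o) //= big1 ?addr0 // => k hk.
  case: (ltnP k Kc) => hkK; last by rewrite hz0 ?mul0r.
  case: (ltngtP k o) => hko.
  - have : ~~ P k.
      apply/negP => hPk; have := hmin _ hPk; rewrite leqNgt hko //.
    rewrite /P negb_exists => /forallP/(_ k); rewrite eqxx hkK /= negbK => /eqP ->.
    by rewrite mulr0.
  - by rewrite hup ?mul0r //; apply: leq_ltn_trans hr (hmono _ _ hko hkK).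
  - by exfalso; move/eqP: hk; apply; apply: val_inj.
exists o; split => //.
- by move=> r hr; rewrite hsum ?(ltnW hr) // hup ?mul0r.
- by rewrite hsum.
Qed.

Lemma piv_ind n m Kc (piv : 'I_n -> 'I_m) N :
  (Kc <= n)%N -> (N < m)%N ->
  (forall j1 j2 : 'I_n, (j1 < j2)%N -> (j2 < Kc)%N -> (piv j1 < piv j2)%N) ->
  (forall i, (i <= N)%N -> exists j : 'I_n, (j < Kc)%N /\ nat_of_ord (piv j) = (m.-1 - i)%N) ->
  forall i, (i <= N)%N -> (i < Kc)%N /\
    forall j : 'I_n, nat_of_ord j = (Kc.-1 - i)%N -> nat_of_ord (piv j) = (m.-1 - i)%N.
Proof.
move=> hKn hNm hmono hJ; elim.
  move=> _; have [j [hj hp]] := hJ 0%N (leq0n N).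
  have hjK : nat_of_ord j = Kc.-1.
    case: (ltnP j Kc.-1) => h; last by rewrite /=; lia.
    exfalso; have ho : (Kc.-1 < n)%N by rewrite /=; lia.
    have hoK : (Ordinal ho < Kc)%N by rewrite /=; lia.
    have := hmono j (Ordinal ho) h hoK; have := ltn_ord (piv (Ordinal ho)).
    move: hp; rewrite /=; move: (nat_of_ord (piv j)) (nat_of_ord (piv (Ordinal ho))) => a b; lia.
  split; first by rewrite /=; lia.
  move=> j' hj'; have -> : j' = j by apply: val_inj; rewrite /= hj' hjK subn0.
  by rewrite hp.
move=> i IH hi; have [hiK hIH] := IH (ltnW hi).
have [j' [hj' hp']] := hJ i.+1 hi.
have ho : (Kc.-1 - i < n)%N by lia.
pose o := Ordinal ho; have hpo := hIH o erefl.
have hoK : (o < Kc)%N by rewrite /=; lia.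
have hj'o : (j' < o)%N.
  case: (ltngtP j' o) => // h; exfalso.
    have := hmono o j' h hj'; move: hpo hp'.
    move: (nat_of_ord (piv o)) (nat_of_ord (piv j')) => a b; lia.
  have e : j' = o by apply: val_inj.
  move: hpo hp'; rewrite e; move: (nat_of_ord (piv o)) => a; lia.
have hj'v : nat_of_ord j' = (Kc.-1 - i.+1)%N.
  case: (ltnP j' (Kc.-1 - i.+1)) => h; last by move: hj'o; rewrite /=; lia.
  exfalso; have ho2 : (Kc.-1 - i.+1 < n)%N by lia.
  have h1 := hmono j' (Ordinal ho2) h (leq_ltn_trans _ hoK).
  have h2 : (piv (Ordinal ho2) < piv o)%N.
    by apply: hmono => //; rewrite /=; move: hj'o h; rewrite /=; lia.
  move: h1 h2 hpo hp'; rewrite /=.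
  move: (nat_of_ord (piv o)) (nat_of_ord (piv j')) (nat_of_ord (piv (Ordinal ho2))) => a b c.
  have : (Kc.-1 - i.+1 <= Kc.-1 - i)%N by lia.
  move=> _; lia.
split; first by move: hj'o; rewrite /=; lia.
move=> j hj; have -> : j = j' by apply: val_inj; rewrite /= hj hj'v.
by rewrite hp'.
Qed.

Lemma size_comb (K : fieldType) (F : seq {poly {poly K}}) dy D
    (w : 'I_(size F) -> {poly {poly K}}) :
  (forall f, f \in F -> (size f <= dy.+1)%N) -> (forall j, (size (w j) <= D)%N) ->
  (size (\sum_j w j * F`_j)%R <= dy + D)%N.
Proof.
move=> hF hw; apply: (big_ind (fun p : {poly {poly K}} => (size p <= dy + D)%N)).
- by rewrite size_poly0.
- move=> p q hp hq; apply: leq_trans (size_polyD _ _) _; by rewrite geq_max hp hq.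
- move=> j _; apply: leq_trans (size_polyMleq _ _) _.
  have := hw j; have := hF _ (mem_nth 0 (ltn_ord j)).
  move: (size (w j)) (size F`_j) => a b; lia.
Qed.

Lemma colpolyE (K : fieldType) m n (H : 'M[{poly K}]_(m, n)) (o : 'I_n) :
  colpoly H o = piinv (col o H).
Proof. by rewrite /colpoly valK. Qed.

Theorem proposition1 (K : fieldType) (F : seq {poly {poly K}}) (dy D : nat)
    (G : seq {poly {poly K}}) (A : nat -> {poly {poly K}}) (Kc : nat)
    (H : 'M[{poly K}]_(dy + D, size F * D)) (U : 'M[{poly K}]_(size F * D)) :
  (2 <= size F)%N ->
  (forall f, f \in F -> (size f <= dy.+1)%N) ->
  zero_dim F ->
  is_rGB F G ->
  is_Aseq F G A ->
  (exists Delta, is_Delta F G A Delta /\ (Delta <= D)%N) ->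
  U \in unitmx -> H = Smat F dy D *m U -> is_HNF H Kc ->
  (exists k, (0 < k <= Kc)%N /\ colpoly H k.-1 \is monic) /\
  (forall K', (0 < K' <= Kc)%N -> colpoly H K'.-1 \is monic ->
     (forall k, (K' < k <= Kc)%N -> colpoly H k.-1 \isn't monic) ->
     [seq colpoly H (Kc - i).-1 | i <- iota 0 (Kc - K').+1]
       = detaching_basis G A (n0 G)
     /\ forall i, (i <= n0 G)%N -> colpoly H (Kc - i).-1 = A i).
Proof.
move=> ht hF hz hG hA [Delta [[hDok _] hDD]] hU eH [hKc [hzero [piv [hpiv hmono]]]].
have hAll := Ainv_all hz hG hA.
have [hns hsG] := ns0 hz hG.
have [hgb hred hsort] := hG.
have hup : forall j : 'I_(size F * D), (j < Kc)%N ->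
    forall r : 'I_(dy + D), (r < piv j)%N -> H r j = 0.
  by move=> j hj; case: (hpiv j hj).
have hmon : forall j : 'I_(size F * D), (j < Kc)%N -> H (piv j) j \is monic.
  by move=> j hj; case: (hpiv j hj).
have hred2 : forall j : 'I_(size F * D), (j < Kc)%N -> forall j' : 'I_(size F * D),
    (j' < j)%N -> (size (H (piv j) j') < size (H (piv j) j))%N.
  by move=> j hj; case: (hpiv j hj).
have step1 : forall i, (i <= n0 G)%N ->
    (exists w : 'cV_(size F * D), Defs.pi (dy + D) (A i) = H *m w) /\
    (size (A i) <= dy + D)%N.
  move=> i hi; have hi' : (ns G <= i <= n0 G)%N by rewrite hns hi.
  have [w [hw eA]] := hDok i hi'.
  have hwD : forall j, (size (w j) <= D)%N by move=> j; apply: leq_trans (hw j) hDD.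
  split; last by rewrite eA; apply: size_comb.
  have [v hv] := inM dy hwD.
  exists (invmx U *m v); rewrite eA hv eH mulmxA -(mulmxA (Smat F dy D)) mulmxV //.
  by rewrite mulmx1.
have hN0m : (n0 G < dy + D)%N.
  by have [_ h] := step1 _ (leqnn _); have [_ hs _ _ _] := hAll (n0 G); rewrite hs in h.
have step2 : forall i, (i <= n0 G)%N -> exists j0 : 'I_(size F * D),
    [/\ (j0 < Kc)%N, nat_of_ord (piv j0) = ((dy + D).-1 - i)%N &
        exists c, lead_coef (A i) = H (piv j0) j0 * c].
  move=> i hi; have [[w ew] hsA] := step1 i hi.
  have [_ hsz _ _ _] := hAll i.
  have hil : (i < dy + D)%N by apply: leq_ltn_trans hi hN0m.
  have hri : ((dy + D).-1 - i < dy + D)%N by lia.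
  pose ri := Ordinal hri.
  have lcnz : lead_coef (A i) != 0 by rewrite lead_coef_eq0 -size_poly_eq0 hsz.
  have Vri : (H *m w) ri 0 = lead_coef (A i).
    rewrite -ew piE (lc_coef hsz) /=; congr (_`_ _); lia.
  have Vlow : forall r : 'I_(dy + D), (r < ri)%N -> (H *m w) r 0 = 0.
    move=> r hr; rewrite -ew piE nth_default // hsz; move: hr; rewrite /=; lia.
  have Vnz : H *m w != 0.
    apply/negP => /eqP h0; move: Vri; rewrite h0 mxE => h; by rewrite -h eqxx in lcnz.
  have [j0 [hj0 hw0 hz0 htop]] := echelon hzero hup hmono Vnz.
  have hnz0 : H (piv j0) j0 * w j0 0 != 0 by rewrite mulf_neq0 // monic_neq0 // hmon.
  exists j0; case: (ltngtP (piv j0) ri) => hc.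
  - by exfalso; move: hnz0; rewrite -htop Vlow // eqxx.
  - by exfalso; move: lcnz; rewrite -Vri hz0 // eqxx.
  - split => //; exists (w j0 0); rewrite -htop -Vri.
    by have -> : piv j0 = ri by apply: val_inj.
have hP := piv_ind hKc hN0m hmono
  (fun i hi => let: ex_intro j0 (And3 h1 h2 _) := step2 i hi in ex_intro _ j0 (conj h1 h2)).
have hoi : forall i, (i <= n0 G)%N -> (Kc.-1 - i < size F * D)%N.
  by move=> i hi; have [h _] := hP i hi; lia.
have step4 : forall i (hi : (i <= n0 G)%N),
    [/\ in_ideal F (colpoly H (Kc.-1 - i)), size (colpoly H (Kc.-1 - i)) = i.+1,
        lead_coef (colpoly H (Kc.-1 - i)) = H (piv (Ordinal (hoi i hi))) (Ordinal (hoi i hi)) &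
        forall b (hb : (b < dy + D)%N),
          (colpoly H (Kc.-1 - i))`_b = H (Ordinal (ord_rev_lt hb)) (Ordinal (hoi i hi))].
  move=> i hi; set o := Ordinal (hoi i hi).
  have [hiK hpv] := hP i hi; have ho := hpv o erefl.
  have hoK : (o < Kc)%N by rewrite /=; lia.
  have eB : colpoly H (Kc.-1 - i) = piinv (col o H) by exact: colpolyE H o.
  have hil : (i < dy + D)%N by apply: leq_ltn_trans hi hN0m.
  have hc : forall b (hb : (b < dy + D)%N), (piinv (col o H))`_b = H (Ordinal (ord_rev_lt hb)) o.
    by move=> b hb; rewrite piinv_coef_lt mxE.
  have htop : (piinv (col o H))`_i = H (piv o) o.
    by rewrite (hc i hil); congr (H _ o); apply: val_inj; rewrite /= ho.
  have hhigh : forall b, (i < b)%N -> (piinv (col o H))`_b = 0.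
    move=> b hb; case: (ltnP b (dy + D)) => hbm; last by rewrite piinv_coef_ge.
    rewrite (hc b hbm); apply: hup => //; rewrite /= ho; lia.
  have hsz : size (piinv (col o H)) = i.+1.
    by apply: size_coefs => //; rewrite htop monic_neq0 // hmon.
  rewrite eB; split => //.
  - by rewrite eH colE -mulmxA -colE; apply: piinvSmul_ideal hF.
  - by rewrite (lc_coef hsz) htop.
have monA : forall i, lead_coef (A i) \is monic.
  move=> i; have [_ _ [g hg [_ ->]] _ _] := hAll i.
  by have [_ h] := red_mem hred hg; rewrite monicE; apply/eqP; exact: h.
have step5 : forall i, (i <= n0 G)%N ->
    lead_coef (colpoly H (Kc.-1 - i)) = lead_coef (A i).
  move=> i hi; have [hB1 hB2 hB3 _] := step4 i hi.
  move: hB3; set o := Ordinal (hoi i hi) => hB3.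
  have [j0 [hj0 hpj0 [c hc]]] := step2 i hi.
  have [hiK hpv] := hP i hi; have ho := hpv o erefl.
  have hoK : (o < Kc)%N by rewrite /=; lia.
  have e : j0 = o.
    case: (ltngtP j0 o) => h; last by apply: val_inj.
      by have := hmono _ _ h hoK; rewrite hpj0 ho ltnn.
    by have := hmono _ _ h hj0; rewrite hpj0 ho ltnn.
  have d1 : lead_coef (colpoly H (Kc.-1 - i)) %| lead_coef (A i).
    by rewrite hc hB3 -e; apply: dvdp_mulIl.
  have d2 := G1 hgb (hAll i) hB1 hB2.
  have mB : lead_coef (colpoly H (Kc.-1 - i)) \is monic by rewrite hB3 hmon.
  apply/eqP; rewrite -(eqp_monic mB (monA i)); by rewrite /eqp d1 d2.
have step6 : forall i, (i <= n0 G)%N -> colpoly H (Kc.-1 - i) = A i.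
  move=> i hi; have [hB1 hB2 hB3 hBc] := step4 i hi.
  have [hA1 hA2 _ _ hA5] := hAll i.
  have e5 := step5 i hi.
  apply/eqP; rewrite -subr_eq0; apply/negP => /negP hE.
  have hEI : in_ideal F (colpoly H (Kc.-1 - i) - A i) by apply: in_idealB.
  have hEle : (size (colpoly H (Kc.-1 - i) - A i)%R <= i)%N.
    apply/leq_sizeP => b hb; rewrite coefB; case: (ltngtP b i) => hbi.
    - by exfalso; move: hb; rewrite leqNgt hbi.
    - by rewrite !nth_default ?subrr // ?hB2 ?hA2.
    - by rewrite hbi -(lc_coef hB2) -(lc_coef hA2) e5 subrr.
  move: hE hEI hEle; set E := colpoly H (Kc.-1 - i) - A i => hE hEI hEle.
  have hsE : (0 < size E)%N by rewrite lt0n size_poly_eq0.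
  set k := (size E).-1; have hEk : size E = k.+1 by rewrite prednK.
  have hki : (k < i)%N by rewrite -ltnS -hEk ltnS.
  have hk0 : (k <= n0 G)%N by apply: leq_trans (ltnW hki) hi.
  have hG2 := G2 hgb (hAll k) hEI hEk; rewrite (lc_coef hEk) coefB in hG2.
  have hkm : (k < dy + D)%N by apply: leq_ltn_trans hk0 hN0m.
  have hBk : (size ((colpoly H (Kc.-1 - i))`_k)%R < size (lead_coef (A k)))%N.
    rewrite (hBc k hkm) -(step5 k hk0).
    have [_ _ hBk3 _] := step4 k hk0; rewrite hBk3.
    have [hkK hpk] := hP k hk0; have [hiK _] := hP i hi.
    have hok : (Ordinal (hoi k hk0) < Kc)%N by rewrite /=; lia.
    have -> : Ordinal (ord_rev_lt hkm) = piv (Ordinal (hoi k hk0)).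
      by apply: val_inj; rewrite /= (hpk (Ordinal (hoi k hk0)) erefl).
    by apply: hred2 => //=; lia.
  have hAk : (size ((A i)`_k)%R < size (lead_coef (A k)))%N.
    have [_ _ [g hg [hgk ->]] _ _] := hAll k.
    have [gnz _] := red_mem hred hg.
    have lgnz : (0 < size (lead_coef g))%N by rewrite lt0n size_poly_eq0 lead_coef_eq0.
    suff : (size ((A i)`_k)%R <= (size (lead_coef g)).-1)%N.
      by move=> h; apply: leq_trans (ltnSn _) _; rewrite -[X in (_ <= X)%N](prednK lgnz) ltnS.
    apply/leq_sizeP => a ha; apply/eqP; apply/negP => /negP hc.
    have := hA5 k a hki hc g hg; rewrite /mdiv /lm /= ha.
    by rewrite /ydeg in hgk; rewrite hgk.
  move: hG2; apply/negP; rewrite -ltnNge.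
  apply: leq_ltn_trans (size_polyD _ _) _; rewrite size_polyN gtn_max hBk hAk //.
have hG0 : G`_0 \in G by apply: mem_nth.
have ydG0 : ydeg G`_0 = n0 G by rewrite /n0 -nth0.
have lcG0s : size (lead_coef G`_0) = 1%N.
  have [g hg hsz1] := zd_y hz hgb.
  have [g0nz _] := red_mem hred hG0.
  have l0 : (0 < size (lead_coef G`_0))%N by rewrite lt0n size_poly_eq0 lead_coef_eq0.
  case/(nthP 0): hg hsz1 => j hj <- hsz1.
  case: (eqVneq j 0%N) => [ej|hj0].
    by apply/eqP; rewrite eqn_leq l0 andbT; rewrite ej in hsz1.
  have := red_size hred hj hsG hj0 (rGB_sorted hG (leq0n j) hj).
  move: hsz1 l0; move: (size (lead_coef G`_0)) (size (lead_coef G`_j)) => a b; lia.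
have lcG0 : lead_coef G`_0 = 1.
  have [_ h] := red_mem hred hG0; move: h; rewrite /lc2 (lc_coef lcG0s) => h.
  by rewrite (size1_polyC (eq_leq lcG0s)) h.
have AN0 : A (n0 G) = G`_0 by have [_ h _] := hA (n0 G); apply: h.
have monN0 : A (n0 G) \is monic by rewrite monicE AN0 lcG0.
have notmon : forall i, (i < n0 G)%N -> A i \isn't monic.
  move=> i hi; have [_ _ [g hg [hgi hlc]] _ _] := hAll i.
  rewrite monicE hlc; case/(nthP 0): hg hgi hlc => j hj <- hgi _.
  have hj0 : j != 0%N by apply/eqP => ej; move: hgi; rewrite ej ydG0; lia.
  have := red_size hred hj hsG hj0 (rGB_sorted hG (leq0n j) hj).
  rewrite lcG0s => hs; apply/eqP => e; move: hs; rewrite e size_poly1; lia.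
have [hKN _] := hP (n0 G) (leqnn _).
have hcol : forall i, (i <= n0 G)%N -> colpoly H (Kc - i).-1 = A i.
  by move=> i hi; rewrite (_ : (Kc - i).-1 = Kc.-1 - i)%N ?step6 //; lia.
split.
  exists (Kc - n0 G)%N; split; first by apply/andP; split; lia.
  by rewrite hcol.
move=> K' hK' hmK' hlarg.
have eK' : K' = (Kc - n0 G)%N.
  case: (ltngtP K' (Kc - n0 G)) => h //; exfalso.
    have h2 : (K' < Kc - n0 G <= Kc)%N by apply/andP; split; lia.
    by have := hlarg _ h2; rewrite hcol // monN0.
  have hi : (Kc - K' < n0 G)%N by lia.
  have := notmon _ hi; rewrite -hcol; last by apply: ltnW.
  by rewrite (_ : Kc - (Kc - K') = K')%N ?hmK' //; lia.
have hKK : (Kc - K' = n0 G)%N by lia.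
split => //; rewrite hKK /detaching_basis hns subn0.
by apply/eq_in_map => i; rewrite mem_iota add0n ltnS => /andP[_ hi]; apply: hcol.
Qed.
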